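(* Let $r$ be a rational number with $0<r<1$ and $r\neq 1/p$ for every integer $p\ge2$, written as $r=[m_1,\dots,m_k]$ with $k\ge2$, $m_i\in\mathbb{Z}_{>0}$, $m_k\ge2$, and let $n\ge2$ be an integer. Let $(S_1,S_2,S_1,S_2)$ be the decomposition of $CS(r)$ described in the context. Then for every rational number $s\in I_1(r;n)\cup I_2(r;n)$: (1) if $k$ is even, $CS(s)$ does not contain $((2n-2)\langle S_1,S_2\rangle,S_1)$ as a subsequence; (2) if $k$ is odd, $CS(s)$ does not contain $((2n-2)\langle S_2,S_1\rangle,S_2)$ as a subsequence.
   Context: Continued fractions: $[m_1,\dots,m_k]=1/(m_1+1/(m_2+\cdots+1/m_k))$. Set $m=m_1$. Intervals: if $k$ is even, $I_1(r;n)=[0,[m_1,\dots,m_{k-1},m_k-1,2]]$ and $I_2(r;n)=([m_1,\dots,m_k,2n-2],1]$; if $k$ is odd, $I_1(r;n)=[0,[m_1,\dots,m_k,2n-2])$ and $I_2(r;n)=[[m_1,\dots,m_{k-1},m_k-1,2],1]$. For $s\in\mathbb{Q}\cup\{\infty\}$, $u_s$ is the cyclically reduced, cyclically alternating word in the free group $F(a,b)$ (letters $a^{\pm1}$, $b^{\pm1}$ alternate) representing the simple loop of slope $s$ on the 4-punctured 2-bridge sphere in the upper tangle complement (well defined up to cyclic permutation and inversion). For a cyclically reduced cyclic word $(w)$ in $\{a,b\}$, decompose it cyclically into maximal subwords that are alternately positive (all exponents $+1$) and negative (all exponents $-1$); $CS(w)$ is the cyclic sequence of their lengths (if $w$ is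 entirely positive or negative, $CS(w)=((|w|))$). $CS(s):=CS(u_s)$. $CS(r)$ consists of the integers $m$ and $m+1$ and has a decomposition $CS(r)=((S_1,S_2,S_1,S_2))$ in which each $S_i$ is a symmetric sequence (equal to its reverse) occurring only twice in $CS(r)$, $S_1$ begins and ends with $m+1$, and $S_2$ begins and ends with $m$; this is the decomposition meant. For a sequence $T$ and finite sequences $A,B$, $d\langle A,B\rangle$ denotes $(A,B,A,B,\dots,A,B)$ with $d$ copies of $(A,B)$. ''Contains as a subsequence'' means occurs as a block of consecutive terms of the cyclic sequence. *)

(* Defs.v *)
From mathcomp Require Import all_boot all_order all_algebra.
Set Implicit Arguments. Unset Strict Implicit. Unset Printing Implicit Defensive.
Import Order.TTheory GRing.Theory Num.Theory.
Local Open Scope ring_scope.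

(** Continued fractions: [m_1,...,m_k] = 1/(m_1 + 1/(m_2 + ... + 1/m_k)). *)
Fixpoint cf (ms : seq nat) : rat :=
  match ms with
  | [::] => 0
  | x :: t => (x%:R + cf t)^-1
  end.

(* [m_1,...,m_{k-1}, m_k - 1, 2] *)
Definition cf_endA (ms : seq nat) : rat :=
  cf (take (size ms).-1 ms ++ [:: (last 0%N ms).-1; 2%N]).
Definition cf_endB (ms : seq nat) (n : nat) : rat :=
  cf (ms ++ [:: (2 * n - 2)%N]).

Definition inI1 (ms : seq nat) (n : nat) (s : rat) : bool :=
  if ~~ odd (size ms) then (0 <= s) && (s <= cf_endA ms)
  else (0 <= s) && (s < cf_endB ms n).

Definition inI2 (ms : seq nat) (n : nat) (s : rat) : bool :=
  if ~~ odd (size ms) then (cf_endB ms n < s) && (s <= 1)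
  else (cf_endA ms <= s) && (s <= 1).

(** Words in F(a,b): a letter is (is_b, positive exponent). *)
Definition letter := (bool * bool)%type.
Definition lA (e : bool) : letter := (false, e).
Definition lB (e : bool) : letter := (true, e).
Definition winv (w : seq letter) : seq letter :=
  rev [seq (x.1, ~~ x.2) | x <- w].

(** u_s for s = q/p (p > 0, gcd(p,q) = 1), following Lee--Sakuma:
    eps_i = (-1)^floor(i q / p),
    hat u_s = b^{eps_1} a^{eps_2} b^{eps_3} ... (p-1 letters),
    u_s = a hat u_s b^{(-1)^q} hat u_s^{-1}   if p is odd,
    u_s = a hat u_s a^{-1}    hat u_s^{-1}    if p is even. *)
Definition eps (s : rat) (i : nat) : bool :=
  (2 %| ((i%:Z * numq s) %/ denq s)%Z)%Z.

Definition uhat (s : rat) : seq letter :=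
  [seq (odd i, eps s i) | i <- iota 1 (`|denq s|%N).-1].

Definition u_word (s : rat) : seq letter :=
  if odd `|denq s|%N then
    lA true :: uhat s ++ lB (2 %| numq s)%Z :: winv (uhat s)
  else
    lA true :: uhat s ++ lA false :: winv (uhat s).

Fixpoint runs_aux (b : bool) (c : nat) (s : seq bool) : seq nat :=
  match s with
  | [::] => [:: c]
  | x :: t => if x == b then runs_aux b c.+1 t else c :: runs_aux x 1 t
  end.
Definition runs (s : seq bool) : seq nat :=
  if s is x :: t then runs_aux x 1 t else [::].

(** CS(w): the cyclic sequence of lengths of maximal positive/negative
    subwords of the cyclic word w, represented by a linear sequence
    (meaningful up to rotation). *)
Definition CSw (w : seq letter) : seq nat :=
  let s := [seq x.2 | x <- w] in
  let i := find id [seq x.1 != x.2 | x <- zip s (rotr 1 s)] in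
  if i == size s then [:: size s] else runs (rot i s).

Definition CS (s : rat) : seq nat := CSw (u_word s).

(** Cyclic sequences (represented by linear ones, up to rotation):
    S occurs as a block of consecutive terms of ((T)). *)
Definition cyc_contains (S T : seq nat) : bool :=
  has (fun i => prefix S (rot i T)) (iota 0 (size T)).
Definition cyc_count (S T : seq nat) : nat :=
  count (fun i => prefix S (rot i T)) (iota 0 (size T)).

(** The decomposition CS(r) = ((S1,S2,S1,S2)) of the context, with m = m_1. *)
Definition CS_decomp (r : rat) (m : nat) (S1 S2 : seq nat) : Prop :=
  [/\ exists i, rot i (CS r) = S1 ++ S2 ++ S1 ++ S2,
      S1 = rev S1 /\ S2 = rev S2,
      cyc_count S1 (CS r) = 2%N /\ cyc_count S2 (CS r) = 2%N,
      S1 != [::] /\ head 0%N S1 = m.+1 /\ last 0%N S1 = m.+1 &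
      S2 != [::] /\ head 0%N S2 = m /\ last 0%N S2 = m].

(** d<A,B> followed by C *)
Definition rep_pattern (d : nat) (A B C : seq nat) : seq nat :=
  flatten (nseq d (A ++ B)) ++ C.

(* Main.v *)
Require Import Defs.
From mathcomp Require Import all_boot all_order all_algebra.
From mathcomp Require Import zify ring lra.
Import Order.TTheory GRing.Theory Num.Theory.

Definition Cc (p q J : nat) := (J * p + q.-1) %/ q.
Definition cc (p q j : nat) := Cc p q j.+1 - Cc p q j.

Lemma CcP p q J x : 0 < q -> (Cc p q J <= x) = (J * p <= x * q).
Proof.
move=> q0; rewrite /Cc -ltnS ltn_divLR // mulSn.
apply/idP/idP => H; lia.
Qed.

Lemma Cc_ge p q J : 0 < q -> J * p <= Cc p q J * q.
Proof. by move=> q0; rewrite -CcP. Qed.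

Lemma Cc_le p q J : Cc p q J * q <= J * p + q.-1.
Proof. exact: leq_divM. Qed.

Lemma Cc_mono p q J1 J2 : J1 <= J2 -> Cc p q J1 <= Cc p q J2.
Proof. by move=> H; apply: leq_div2r; rewrite leq_add2r leq_mul2r H orbT. Qed.

Lemma Cc0 p q : 0 < q -> Cc p q 0 = 0.
Proof. by move=> q0; rewrite /Cc mul0n add0n divn_small // prednK. Qed.

Lemma CcD p q J : 0 < q -> Cc p q (J + q) = Cc p q J + p.
Proof.
move=> q0; rewrite /Cc.
have -> : (J + q) * p + q.-1 = p * q + (J * p + q.-1) by rewrite mulnDl mulnC; lia.
by rewrite divnMDl // addnC.
Qed.

Lemma CcDm p q J k : 0 < q -> Cc p q (J + k * q) = Cc p q J + k * p.
Proof.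
move=> q0; elim: k => [|k IH]; first by rewrite !mul0n !addn0.
have -> : J + k.+1 * q = (J + k * q) + q by rewrite mulSn; lia.
by rewrite CcD // IH mulSn; lia.
Qed.

Lemma cc_per p q j k : 0 < q -> cc p q (j + k * q) = cc p q j.
Proof.
move=> q0; rewrite /cc -addSn !CcDm //.
have := @Cc_mono p q j j.+1 (leqnSn j); lia.
Qed.

Lemma cc_mod p q j : 0 < q -> cc p q j = cc p q (j %% q).
Proof. by move=> q0; rewrite {1}(divn_eq j q) addnC cc_per. Qed.

Lemma cc_le0 p q j : 0 < q -> cc p q j <= cc p q 0.
Proof.
move=> q0; rewrite /cc Cc0 // leq_subLR CcP //.
have h1 := Cc_ge p q j q0; have h2 := Cc_ge p q 1 q0.
rewrite mulnDl mulSn. lia.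
Qed.

Lemma cc_gt0 p q j : 0 < q -> q <= p -> 0 < cc p q j.
Proof.
move=> q0 qp; rewrite /cc subn_gt0 ltnNge CcP //.
have h := Cc_le p q j; apply/negP => h2.
have : j.+1 * p <= j * p + q.-1 by apply: leq_trans h2 h.
rewrite mulSn; lia.
Qed.

Lemma runs_nseq b c k t : runs_aux b c (nseq k b ++ t) = runs_aux b (c + k) t.
Proof. by elim: k c => [|k IH] c /=; rewrite ?addn0 // eqxx IH addSnnS. Qed.

Lemma runs_blocks (g : nat -> nat) K : (forall j, 0 < g j) ->
  forall j0 c k, runs_aux (~~ odd j0) c (nseq k (~~ odd j0) ++
     flatten [seq nseq (g j) (~~ odd j) | j <- iota j0.+1 K])
  = (c + k) :: [seq g j | j <- iota j0.+1 K].
Proof.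
move=> gpos; elim: K => [|K IH] j0 c k.
  by rewrite /= runs_nseq.
rewrite /= runs_nseq.
have := gpos j0.+1; case E: (g j0.+1) => [//|m] _ /=.
have := IH j0.+1 1 m; rewrite /= negbK => ->.
by case: (odd j0); rewrite /= add1n.
Qed.

Lemma runs_flat (g : nat -> nat) K : (forall j, 0 < g j) -> 0 < K ->
  runs (flatten [seq nseq (g j) (~~ odd j) | j <- iota 0 K]) = [seq g j | j <- iota 0 K].
Proof.
move=> gpos; case: K => [//|K] _ /=.
have := gpos 0; case E: (g 0) => [//|m] _ /=.
by have := runs_blocks g K gpos 0 1 m; rewrite /= add1n.
Qed.

Lemma map_cst (T : Type) (x : bool) (s : seq T) : [seq x | _ <- s] = nseq (size s) x.
Proof. by elim: s => //= y s ->. Qed.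

Lemma sign_blocks p q J : 0 < q -> 0 < p ->
  [seq ~~ odd (i * q %/ p) | i <- iota 0 (Cc p q J)] =
  flatten [seq nseq (cc p q j) (~~ odd j) | j <- iota 0 J].
Proof.
move=> q0 p0; elim: J => [|J IH]; first by rewrite Cc0.
have hm := @Cc_mono p q J J.+1 (leqnSn J).
rewrite -(subnKC hm) iotaD map_cat IH -addn1 iotaD map_cat flatten_cat /= cats0.
congr (_ ++ _).
rewrite add0n addn1 /cc.
set L := iota _ _.
have -> : [seq ~~ odd (i * q %/ p) | i <- L] = [seq ~~ odd J | _ <- L].
  apply/eq_in_map => i; rewrite /L.
  2: by rewrite map_cst size_iota. rewrite mem_iota subnKC // => /andP[h1 h2].
have -> : i * q %/ p = J => //.
apply/eqP; rewrite eqn_leq; apply/andP; split.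
  rewrite -ltnS ltn_divLR // ltnNge -CcP //. by rewrite -ltnNge.
by rewrite leq_divRL // -CcP.
Qed.

Lemma flip_odd p q t : coprime q p -> 0 < q -> 0 < t < p ->
  odd ((p + t) * q %/ p) = ~~ odd ((p - t) * q %/ p).
Proof.
move=> cop q0 /andP[t0 tp].
have p0 : 0 < p by lia.
set k := t * q %/ p; set r := t * q %% p.
have e : t * q = k * p + r by rewrite /k /r -divn_eq.
have rp : r < p by rewrite /r ltn_mod.
have r0 : 0 < r.
  rewrite lt0n; apply/negP => /eqP r0.
  have : p %| t * q by rewrite /dvdn -/r r0.
  rewrite Gauss_dvdl; last by rewrite coprime_sym.
  by move/(dvdn_leq t0); rewrite leqNgt tp.
have kq : k < q.
  rewrite /k ltn_divLR // mulnC ltn_mul2l q0 //.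
have -> : (p + t) * q %/ p = q + k.
  by rewrite mulnDl e (mulnC p q) divnMDl // divnMDl // divn_small // addn0.
have -> : (p - t) * q %/ p = q - k - 1.
  have -> : (p - t) * q = (q - k - 1) * p + (p - r).
    rewrite mulnBl e.
    have h : k.+1 <= q by [].
    have -> : q - k - 1 = q - k.+1 by lia.
    rewrite mulnBl mulSn (mulnC p q).
    have h1 : k.+1 * p <= q * p by rewrite leq_mul2r h orbT.
    rewrite mulSn in h1. lia.
  by rewrite divnMDl // divn_small ?addn0 //; lia.
have -> : q + k = (q - k - 1) + (2 * k + 1) by lia.
by rewrite oddD addn1 /= oddM /= addbT.
Qed.

Lemma eps_nat (s : rat) q p i : numq s = Posz q -> denq s = Posz p ->
  eps s i = ~~ odd (i * q %/ p).
Proof.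
by move=> hq hp; rewrite /eps hq hp -PoszM divz_nat dvdzE /= dvdn2.
Qed.

Lemma rev_iota1 p' :
  rev (iota 1 p') = [seq (2 * p'.+1 - i)%N | i <- iota p'.+2 p'].
Proof.
apply: (@eq_from_nth _ 0%N); first by rewrite size_rev size_map !size_iota.
move=> t; rewrite size_rev size_iota => tp.
rewrite nth_rev ?size_iota // (nth_map 0%N) ?size_iota // !nth_iota //; lia.
Qed.

Lemma signs (s : rat) q p : numq s = Posz q -> denq s = Posz p -> (0 < q)%N -> (q <= p)%N ->
  [seq x.2 | x <- u_word s] = [seq ~~ odd (i * q %/ p) | i <- iota 0 (2 * p)].
Proof.
move=> hq hp q0 qp.
have cop : coprime q p by have := coprime_num_den s; rewrite hq hp.
have p0 : (0 < p)%N by lia.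
case: p hp qp p0 cop => [//|p'] hp qp _ cop.
have ep := fun i => eps_nat s q p'.+1 i hq hp.
have Ei : iota 0 (2 * p'.+1) = 0%N :: iota 1 p' ++ p'.+1 :: iota p'.+2 p'.
  have -> : (2 * p'.+1 = 1 + p' + 1 + p')%N by lia.
  by rewrite !iotaD /= -!catA /= !add0n !addn1 !add1n.
have Hrev : rev [seq ~~ eps s i | i <- iota 1 p'] =
            [seq ~~ odd (i * q %/ p'.+1) | i <- iota p'.+2 p'].
  rewrite -map_rev rev_iota1 -map_comp; apply/eq_in_map => i.
  rewrite mem_iota => /andP[h1 h2] /=.
  rewrite ep; have := flip_odd p'.+1 q (i - p'.+1) cop q0.
  have -> : (p'.+1 + (i - p'.+1) = i)%N by lia.
  have -> : (p'.+1 - (i - p'.+1) = 2 * p'.+1 - i)%N by lia.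
  move=> -> //; last by lia.
have H1 : [seq x.2 | x <- [seq (odd i, eps s i) | i <- iota 1 p']] =
   [seq ~~ odd (i * q %/ p'.+1) | i <- iota 1 p'].
  by rewrite -map_comp; apply/eq_in_map => i _ /=; rewrite ep.
have H2 : [seq x.2 | x <- winv [seq (odd i, eps s i) | i <- iota 1 p']] =
   [seq ~~ odd (i * q %/ p'.+1) | i <- iota p'.+2 p'].
  by rewrite -Hrev /winv map_rev -!map_comp.
rewrite Ei /u_word /uhat hp /=.
have Hm : ~~ odd (p'.+1 * q %/ p'.+1) = ~~ odd q by rewrite mulKn.
case: ifP => podd /=; rewrite !map_cat /= H1 H2 Hm //.
- by rewrite hq dvdzE /= dvdn2.
- congr (_ :: _ ++ _ :: _).
  have qo : odd q.
    apply/negPn/negP => qe.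
    have : (2 %| gcdn q p'.+1)%N by rewrite dvdn_gcd !dvdn2 qe /=; move: podd; case: (odd p').
    by move/eqP: cop => ->.
  by rewrite qo.
Qed.

Lemma CSw_rcons w mid : [seq x.2 | x <- w] = rcons (true :: mid) false ->
  CSw w = runs [seq x.2 | x <- w].
Proof.
move=> H; rewrite /CSw H rotr1_rcons /=.
by rewrite cats0.
Qed.

Lemma Cc2 p q : 0 < q -> Cc p q (2 * q) = 2 * p.
Proof.
move=> q0; rewrite /Cc (mulnC 2 q) -mulnA (mulnC q) divnMDl // divn_small ?addn0 //.
by rewrite prednK.
Qed.

Lemma CS_formula (s : rat) q p : numq s = Posz q -> denq s = Posz p -> 0 < q -> q <= p ->
  CS s = mkseq (cc p q) (2 * q).
Proof.
move=> hq hp q0 qp.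
have p0 : 0 < p by lia.
have Hs := signs s q p hq hp q0 qp.
rewrite /CS.
have cop : coprime q p by have := coprime_num_den s; rewrite hq hp.
have [mid Hmid] : exists mid, [seq x.2 | x <- u_word s] = rcons (true :: mid) false.
  exists [seq ~~ odd (i * q %/ p) | i <- iota 1 (2 * p - 2)].
  rewrite Hs.
  rewrite [in LHS](_ : 2 * p = 1 + (2 * p - 2) + 1); last by lia.
  rewrite !iotaD !map_cat /= -cats1 div0n /= add0n.
  congr (_ :: _ ++ [:: _]).
  have -> : (1 + (2 * p - 2)) * q = (2 * q - 1) * p + (p - q).
    have -> : 1 + (2 * p - 2) = (2 * p - 1) by lia.
    rewrite !mulnBl !mul1n; nia.
  rewrite divnMDl // divn_small ?addn0; last by lia.
  have -> : 2 * q - 1 = (q - 1).*2.+1 by lia.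
  by rewrite /= odd_double.
rewrite (CSw_rcons _ _ Hmid) Hs -(Cc2 p q q0) sign_blocks // runs_flat //.
- by move=> j; apply: cc_gt0.
- by rewrite muln_gt0.
Qed.

Definition win p q j l := mkseq (fun t => cc p q (j + t)) l.

Lemma mkseqD (T : Type) (f : nat -> T) a b :
  mkseq f (a + b) = mkseq f a ++ mkseq (fun t => f (a + t)) b.
Proof.
rewrite /mkseq iotaD map_cat add0n; congr (_ ++ _).
by rewrite -[X in iota X]addn0 iotaDl -map_comp.
Qed.

Lemma rot_mk (T : Type) (c : nat -> T) N i : (forall x, c (x + N) = c x) -> i < N ->
  rot i (mkseq c N) = mkseq (fun t => c (i + t)) N.
Proof.
move=> per iN.
have hN : N = i + (N - i) by rewrite subnKC ?(ltnW iN).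
rewrite [in LHS]hN mkseqD.
have {1}-> : i = size (mkseq c i) by rewrite size_mkseq.
rewrite rot_size_cat [in RHS]hN (addnC i) mkseqD.
congr (_ ++ _); apply: eq_mkseq => t /=.
have -> : i + (N - i + t) = t + N by lia.
by rewrite per.
Qed.

Lemma prefix_mk (g : nat -> nat) N S : prefix S (mkseq g N) ->
  S = mkseq g (size S) /\ size S <= N.
Proof.
rewrite prefixE /mkseq -map_take (take_iota (size S) 0 N). move/eqP => H.
have hs : size S = minn (size S) N by rewrite -{1}H size_map size_iota.
split; last by rewrite hs geq_minr.
by rewrite -{1}H -hs.
Qed.

Lemma mk_prefix (g : nat -> nat) N S : size S <= N -> S = mkseq g (size S) ->
  prefix S (mkseq g N).
Proof.
move=> hs H; rewrite prefixE /mkseq -map_take take_iota.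
by rewrite (minn_idPl hs) {2}H.
Qed.

Lemma cat_mk (g : nat -> nat) n X W Y : X ++ W ++ Y = mkseq g n ->
  W = mkseq (fun t => g (size X + t)) (size W).
Proof.
move=> H.
have hn : size X + size W + size Y = n by rewrite -(size_mkseq g n) -H !size_cat addnA.
apply: (@eq_from_nth _ 0); first by rewrite size_mkseq.
move=> t ht; rewrite nth_mkseq //.
have := congr1 (fun s => nth 0 s (size X + t)) H.
rewrite nth_cat ltnNge leq_addr /= addKn nth_cat ht nth_mkseq //; lia.
Qed.

Lemma sum_win p q j l : sumn (win p q j l) = Cc p q (j + l) - Cc p q j.
Proof.
elim: l => [|l IH]; first by rewrite addn0 subnn.
rewrite /win mkseqS sumn_rcons -/(win p q j l) IH /cc addnS.
have h1 := @Cc_mono p q j (j + l) (leq_addr _ _).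
have h2 := @Cc_mono p q (j + l) (j + l).+1 (leqnSn _).
lia.
Qed.

Lemma win_per p q j k l : 0 < q -> win p q (j + k * q) l = win p q j l.
Proof.
move=> q0; apply: eq_mkseq => t.
by rewrite -addnA (addnC _ t) addnA cc_per.
Qed.

Lemma win_mod p q j l : 0 < q -> win p q j l = win p q (j %% q) l.
Proof. by move=> q0; rewrite {1}(divn_eq j q) addnC win_per. Qed.

Lemma Cc_shift P Q t1 k J : 0 < Q -> t1 * P = k * Q + 1 ->
  Cc P Q (J + t1) = k.+1 + J * P %/ Q.
Proof.
move=> Q0 e; rewrite /Cc mulnDl e.
have -> : J * P + (k * Q + 1) + Q.-1 = k.+1 * Q + J * P by rewrite mulSn; lia.
by rewrite divnMDl.
Qed.

Lemma Cc_nodiv P Q J : 0 < Q -> ~~ (Q %| J * P) -> Cc P Q J = (J * P %/ Q).+1.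
Proof.
move=> Q0 nd; rewrite /Cc.
have r0 : 0 < J * P %% Q by rewrite lt0n; apply: contra nd => /eqP h; rewrite /dvdn h.
have rQ : J * P %% Q < Q by rewrite ltn_mod.
rewrite {1}(divn_eq (J * P) Q).
have -> : J * P %/ Q * Q + J * P %% Q + Q.-1 = (J * P %/ Q).+1 * Q + (J * P %% Q).-1
  by rewrite mulSn; lia.
have hr : (J * P %% Q).-1 < Q by apply: leq_ltn_trans (leq_pred _) rQ.
by rewrite divnMDl // (divn_small hr) addn0.
Qed.

Lemma cc_shift P Q t1 k j : 0 < Q -> coprime Q P -> t1 * P = k * Q + 1 ->
  ~~ (Q %| j) -> ~~ (Q %| j.+1) -> cc P Q (j + t1) = cc P Q j.
Proof.
move=> Q0 cop e h1 h2.
have nd : forall J, ~~ (Q %| J) -> ~~ (Q %| J * P).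
  by move=> J; rewrite mulnC Gauss_dvdr.
rewrite /cc -addSn !(Cc_shift _ _ _ _ _ Q0 e) !Cc_nodiv ?nd //.
have := @leq_div2r Q (j * P) (j.+1 * P) (leq_mul (leqnSn j) (leqnn P)).
lia.
Qed.

Lemma Cc_mirror P Q n J : 0 < Q -> J <= n * Q -> Cc P Q (n * Q - J) = n * P - J * P %/ Q.
Proof.
move=> Q0 JnQ; rewrite /Cc.
set a := J * P %/ Q; set r := J * P %% Q.
have e : J * P = a * Q + r by rewrite /a /r -divn_eq.
have rQ : r < Q by rewrite /r ltn_mod.
have hJ : J * P <= n * Q * P by rewrite leq_mul2r JnQ orbT.
have -> : (n * Q - J) * P + Q.-1 = (n * P - a) * Q + (Q.-1 - r).
  rewrite !mulnBl (mulnAC n Q P). lia.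
by rewrite divnMDl // divn_small ?addn0 //; lia.
Qed.

Lemma cc_mirror P Q t1 k n j : 0 < Q -> t1 * P = k * Q + 1 -> j < n * Q ->
  cc P Q (n * Q - j.+1) = cc P Q (j + t1).
Proof.
move=> Q0 e jn.
rewrite /cc -addSn !(Cc_shift _ _ _ _ _ Q0 e).
have -> : (n * Q - j.+1).+1 = n * Q - j by lia.
rewrite !Cc_mirror //; try lia.
have h1 := @leq_div2r Q (j * P) (j.+1 * P) (leq_mul (leqnSn j) (leqnn P)).
have h2 : j.+1 * P %/ Q <= n * P.
  have := @leq_div2r Q (j.+1 * P) (n * Q * P) (leq_mul jn (leqnn P)).
  by rewrite mulnAC mulnK.
lia.
Qed.

Lemma win_shift P Q t1 k j l : 0 < Q -> coprime Q P -> t1 * P = k * Q + 1 ->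
  (forall w, w <= l -> ~~ (Q %| j + w)) -> win P Q (j + t1) l = win P Q j l.
Proof.
move=> Q0 cop e H; apply: (@eq_from_nth _ 0) => [|t]; rewrite ?size_mkseq // => tl.
rewrite !nth_mkseq // -addnA (addnC t1) addnA (cc_shift _ _ _ _ _ Q0 cop e) //.
- by apply: H; lia.
- by rewrite -addnS; apply: H; lia.
Qed.

Lemma win_mirror P Q t1 k n j l : 0 < Q -> t1 * P = k * Q + 1 -> j + l <= n * Q ->
  rev (win P Q j l) = win P Q (n * Q - j - l + t1) l.
Proof.
move=> Q0 e jl; apply: (@eq_from_nth _ 0) => [|t]; rewrite ?size_rev ?size_mkseq // => tl.
rewrite nth_rev ?size_mkseq // !nth_mkseq //; last by lia.
rewrite -addnA (addnC t1) addnA -(cc_mirror _ _ _ _ n _ Q0 e); last by lia.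
congr (cc _ _ _); lia.
Qed.

Lemma cat_win p q j n X W Y : X ++ W ++ Y = win p q j n ->
  W = win p q (j + size X) (size W).
Proof.
move/cat_mk => ->; rewrite /win size_mkseq.
by apply: (@eq_mkseq _ (fun t => cc p q (j + (size X + t))) (fun t => cc p q (j + size X + t))) => t; rewrite addnA.
Qed.

Lemma mod2 x Q : 0 < Q -> x < 2 * Q -> x %% Q = 0 -> x = 0 \/ x = Q.
Proof.
move=> Q0 x2 h.
have /dvdnP [e ex] : Q %| x by rewrite /dvdn h.
subst x.
have : e < 2 by rewrite -(ltn_pmul2r Q0).
case: e x2 h => [|[|//]] _ _ _; [left|right]; lia.
Qed.

Lemma mod_shift x t Q : x < Q -> 0 < t < Q -> (x + t) %% Q != x.
Proof.
move=> xQ /andP[t0 tQ].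
case: (ltnP (x + t) Q) => h.
  by rewrite modn_small //; lia.
have -> : x + t = (x + t - Q) + Q by lia.
by rewrite modnDr modn_small; lia.
Qed.

Lemma win_T P Q z : 0 < Q -> z < 2 * Q ->
  rot z (mkseq (cc P Q) (2 * Q)) = win P Q z (2 * Q).
Proof.
move=> Q0 zQ; rewrite rot_mk //.
by move=> x; rewrite -(cc_per P Q x 2 Q0) mulnC.
Qed.

Lemma uniq_win P Q S j0 : 0 < Q -> cyc_count S (mkseq (cc P Q) (2 * Q)) = 2 ->
  S = win P Q j0 (size S) -> size S <= 2 * Q ->
  forall j, win P Q j (size S) = S -> j %% Q = j0 %% Q.
Proof.
move=> Q0 cnt HS hs j Hj.
apply/eqP; apply/negPn/negP => ne.
set x := j0 %% Q; set y := j %% Q.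
have xQ : x < Q by rewrite ltn_mod.
have yQ : y < Q by rewrite ltn_mod.
have ex : x = j0 %% Q by [].
have ey : y = j %% Q by [].
clearbody x y.
set pr := (fun i => prefix S (rot i (mkseq (cc P Q) (2 * Q)))).
have good : forall z, z < 2 * Q -> win P Q z (size S) = S -> pr z.
  move=> z zQ hz; rewrite /pr win_T //; apply: mk_prefix; rewrite ?size_mkseq //.
have : 3 <= count pr (iota 0 (2 * Q)).
  rewrite -size_filter.
  apply: (@uniq_leq_size _ [:: x; x + Q; y]).
    rewrite /= !inE negb_or; apply/and3P; split.
    - by apply/andP; split; apply/eqP; lia.
    - by apply/eqP; lia.
    - done.
  move=> z; rewrite !inE mem_filter mem_iota add0n => /or3P [] /eqP ->.
  - rewrite good ?andbT //; try lia.
    by rewrite ex -win_mod // HS.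
  - rewrite good ?andbT //; try lia.
    by rewrite -[Q in x + Q]mul1n win_per // ex -win_mod // HS.
  - rewrite good ?andbT //; try lia.
    by rewrite ey -win_mod.
by move: cnt; rewrite /cyc_count size_mkseq => ->.
Qed.

Lemma head_win p q j l : 0 < l -> head 0 (win p q j l) = cc p q j.
Proof. by case: l => // l _; rewrite /win /mkseq /= addn0. Qed.

Lemma nodiv Q x : 0 < x < Q -> ~~ (Q %| x).
Proof. move=> /andP[x0 xQ]; apply/negP => /(dvdn_leq x0); lia. Qed.

Lemma core P Q S1 S2 i m : 2 <= Q -> 0 < P -> coprime Q P ->
  rot i (mkseq (cc P Q) (2 * Q)) = S1 ++ S2 ++ S1 ++ S2 ->
  S1 = rev S1 ->
  cyc_count S1 (mkseq (cc P Q) (2 * Q)) = 2 -> cyc_count S2 (mkseq (cc P Q) (2 * Q)) = 2 ->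
  S1 != [::] -> S2 != [::] -> head 0 S1 = m.+1 -> head 0 S2 = m ->
  exists t1 k, [/\ t1 * P = k * Q + 1, 0 < t1 < Q, S1 = win P Q 0 t1 & S2 = win P Q t1 (Q - t1)].
Proof.
move=> Q2 P0 cop Hrot pal c1 c2 n1 n2 h1 h2.
have Q0 : 0 < Q by lia.
have [t0 t0Q dv] := @Bezoutl Q P Q0.
rewrite (eqP cop) in dv.
case/dvdnP: dv => ka eka.
have t00 : 0 < t0.
  rewrite lt0n; apply/negP => /eqP t00; rewrite t00 mul0n addn0 in eka.
  by move: eka; case: ka => [|ka]; rewrite ?mul0n ?mulSn; lia.
have kaP : ka <= P by nia.
exists (Q - t0), (P - ka).
have e : (Q - t0) * P = (P - ka) * Q + 1.
  rewrite !mulnBl (mulnC Q P) -eka. nia.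
have t1Q : 0 < Q - t0 < Q by lia.
move: (Q - t0) e t1Q => t1 e t1Q {t0 t0Q eka t00 kaP}.
set T := mkseq (cc P Q) (2 * Q).
have [i' [i'Q Hi']] : exists i', i' < 2 * Q /\ rot i T = win P Q i' (2 * Q).
  case: (ltnP i (2 * Q)) => h.
    by exists i; split => //; rewrite win_T.
  exists 0; split; first by lia.
  by rewrite rot_oversize ?size_mkseq.
rewrite Hi' win_mod // in Hrot.
set i0 := i' %% Q in Hrot.
have i0Q : i0 < Q by rewrite ltn_mod.
clearbody i0.
set a := size S1; set b := size S2.
have ab : a + b = Q.
  have := congr1 size Hrot; rewrite size_mkseq !size_cat -/a -/b; lia.
have a0 : 0 < a by rewrite lt0n size_eq0.
have b0 : 0 < b by rewrite lt0n size_eq0.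
have HS1 : S1 = win P Q i0 a.
  have := @cat_win P Q i0 (2 * Q) [::] S1 (S2 ++ S1 ++ S2).
  by rewrite cat0s addn0 => ->.
have HS2 : S2 = win P Q (i0 + a) b.
  by have := @cat_win P Q i0 (2 * Q) S1 S2 (S1 ++ S2) (esym Hrot).
have U1 : forall j, win P Q j a = S1 -> j %% Q = i0.
  move=> j hj; rewrite (uniq_win P Q S1 i0 Q0 c1 HS1 _ j hj) ?(modn_small i0Q) //; lia.
have U2 : forall j, win P Q j b = S2 -> j %% Q = (i0 + a) %% Q.
  move=> j hj; rewrite (uniq_win P Q S2 (i0 + a) Q0 c2 HS2 _ j hj) //; lia.
set i2 := (i0 + a) %% Q in U2.
have i2e : i2 = if i0 + a < Q then i0 + a else i0 + a - Q.
  rewrite /i2; case: ifP => h; first by rewrite modn_small.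
  have -> : i0 + a = (i0 + a - Q) + Q by lia.
  rewrite modnDr modn_small; lia.
have ei2 : (i0 + a) %% Q = i2 by [].
clearbody i2.
have H1 : (i0 == 0) || (Q <= i0 + a).
  apply/negPn/negP => H.
  have : win P Q (i0 + t1) a = S1.
    rewrite HS1 (win_shift _ _ _ _ _ _ Q0 cop e) // => w wa.
    apply: nodiv; lia.
  move/U1 => /eqP; by rewrite (negbTE (mod_shift _ _ _ i0Q t1Q)).
have H3 : i2 != 0.
  apply/negP => /eqP i20.
  move: h1 h2; rewrite HS1 HS2 !head_win // (cc_mod _ _ (i0 + a) Q0).
  rewrite ei2 i20 => h1 h2.
  have := cc_le0 P Q i0 Q0; rewrite h1 h2; lia.
have H2 : (i2 == 0) || (Q <= i2 + b).
  apply/negPn/negP => H.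
  have : win P Q (i2 + t1) b = S2.
    rewrite HS2 (win_mod _ _ (i0 + a)) // ei2 (win_shift _ _ _ _ _ _ Q0 cop e) // => w wa.
    apply: nodiv; lia.
  move/U2 => /eqP.
  have i2Q : i2 < Q by rewrite -ei2 ltn_mod.
  by rewrite (negbTE (mod_shift _ _ _ i2Q t1Q)).
have i00 : i0 = 0.
  move: H1 H2 H3; rewrite i2e; case: ifP; lia.
subst i0.
have Hp : win P Q (2 * Q - 0 - a + t1) a = S1.
  by rewrite -(win_mirror _ _ _ _ _ _ _ Q0 e) -?HS1 //; lia.
have := U1 _ Hp.
have -> : 2 * Q - 0 - a + t1 = (Q - a + t1) + Q by lia.
rewrite modnDr => /(mod2 _ _ Q0) h.
have at1 : a = t1 by case: h; lia.
split => //.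
- by rewrite HS1 at1.
- by rewrite HS2 add0n at1; congr win; lia.
Qed.

Lemma win_ineq p q z n X W Y : 0 < q -> X ++ W ++ Y = win p q z n ->
  sumn W * q < size W * p + q /\ size W * p < sumn W * q + q.
Proof.
move=> q0 /cat_win ->; rewrite sum_win size_mkseq.
set J := z + size X; set l := size W.
have h1 := Cc_ge p q (J + l) q0; have h2 := Cc_le p q (J + l).
have h3 := Cc_ge p q J q0; have h4 := Cc_le p q J.
have hm := @Cc_mono p q J (J + l) (leq_addr _ _).
have hm' : Cc p q J * q <= Cc p q (J + l) * q by rewrite leq_mul2r hm orbT.
rewrite mulnBl; rewrite mulnDl in h1 h2.
split; lia.
Qed.

Lemma flat_size d (L : seq nat) : size (flatten (nseq d L)) = d * size L.
Proof. by elim: d => //= d IH; rewrite size_cat IH mulSn. Qed.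

Lemma flat_sum d (L : seq nat) : sumn (flatten (nseq d L)) = d * sumn L.
Proof. by elim: d => //= d IH; rewrite sumn_cat IH mulSn. Qed.

Lemma s_side p q A B dd : 0 < q ->
  cyc_contains (rep_pattern dd.+2 A B A) (mkseq (cc p q) (2 * q)) ->
  let LA := size A in let LB := size B in let SA := sumn A in let SB := sumn B in
  [/\ (dd.+2 * (SA + SB) + SA) * q < (dd.+2 * (LA + LB) + LA) * p + q,
      (dd.+2 * (LA + LB) + LA) * p < (dd.+2 * (SA + SB) + SA) * q + q,
      (2 * SB + SA) * q < (2 * LB + LA) * p + q &
      (2 * LB + LA) * p < (2 * SB + SA) * q + q].
Proof.
move=> q0 /hasP [z]; rewrite mem_iota size_mkseq add0n => zq.
rewrite win_T // => /prefix_mk [Hpi _] LA LB SA SB.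
set pi := rep_pattern _ _ _ _ in Hpi.
have E1 : [::] ++ pi ++ [::] = win p q z (size pi) by rewrite cats0.
have E2 : A ++ (B ++ A ++ B) ++ (flatten (nseq dd (A ++ B)) ++ A) = win p q z (size pi).
  by rewrite /win -Hpi /pi /rep_pattern /= -!catA.
have [w1 w2] := win_ineq _ _ _ _ _ _ _ q0 E1.
have [w3 w4] := win_ineq _ _ _ _ _ _ _ q0 E2.
have sp : size pi = dd.+2 * (LA + LB) + LA by rewrite /pi /rep_pattern size_cat flat_size size_cat.
have ssp : sumn pi = dd.+2 * (SA + SB) + SA by rewrite /pi /rep_pattern sumn_cat flat_sum sumn_cat.
rewrite sp ssp in w1 w2.
rewrite !size_cat !sumn_cat -/LA -/LB -/SA -/SB in w3 w4.
split; lia.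
Qed.

Lemma solve_even P Q a c t1 k : coprime Q P -> 0 < a < Q -> 0 < t1 < Q ->
  P * a = Q * c + 1 -> t1 * P = k * Q + 1 -> a = t1 /\ c = k.
Proof.
move=> cop ha ht e1 e2.
have at1 : a = t1.
  wlog h : a c t1 k ha ht e1 e2 / t1 <= a.
    move=> W; case: (leqP t1 a) => h; first exact: (W a c t1 k).
    by apply/esym; apply: (W t1 k a c) => //; lia.
  have e : (a - t1) * P = (c - k) * Q.
    rewrite !mulnBl (mulnC a) e1 e2 (mulnC Q); lia.
  have : Q %| (a - t1) * P by rewrite e dvdn_mull.
  rewrite Gauss_dvdl //; case: (posnP (a - t1)) => [|h0]; first lia.
  move/(dvdn_leq h0); lia.
split => //; subst a.
have : Q * c = Q * k by rewrite mulnC e2 in e1; lia.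
by move/eqP; rewrite eqn_pmul2l; [move/eqP | lia].
Qed.

Lemma solve_odd P Q a c t1 k : coprime Q P -> 0 < a < Q -> 0 < t1 < Q ->
  Q * c = P * a + 1 -> t1 * P = k * Q + 1 -> a + t1 = Q /\ c + k = P.
Proof.
move=> cop ha ht e1 e2.
have e : (c + k) * Q = (a + t1) * P by rewrite !mulnDl (mulnC c) e1 (mulnC a) ; lia.
have : Q %| (a + t1) * P by rewrite -e dvdn_mull.
rewrite Gauss_dvdl // => hd.
have at1 : a + t1 = Q.
  have h0 : 0 < a + t1 by lia.
  have := dvdn_leq h0 hd.
  case/dvdnP: hd => x hx.
  have : x < 2 by nia.
  case: x hx => [|[|//]]; lia.
split => //.
rewrite at1 in e.
have : Q * (c + k) = Q * P by rewrite mulnC e mulnC.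
by move/eqP; rewrite eqn_pmul2l; [move/eqP | lia].
Qed.

Lemma key_pred x y z : 0 < x -> y * (x.-1 * 2 + 1) + z * 2 = 2 * (y * x + z) - y.
Proof. case: x => // x _ /=; nia. Qed.

Lemma not_small (S : seq nat) x : 1 < size S -> ~~ cyc_contains S [:: x].
Proof.
move=> hs; apply/hasP => [[i _]]; rewrite prefixE => /eqP h.
by move: hs; rewrite -h size_take size_rot /=; case: (size S) => [|[|k]].
Qed.

Lemma fin_even P Q t1 ka d p q : t1 <= Q -> ka < P ->
  (d * (ka.+1 + (P - ka.+1)) + ka.+1) * q < (d * (t1 + (Q - t1)) + t1) * p + q ->
  (2 * (Q - t1) + t1) * p < (2 * (P - ka.+1) + ka.+1) * q + q ->
  ~~ ((d * Q + t1) * p < q * (d * P + ka)) /\ ~~ (q * (2 * P - ka) <= (2 * Q - t1) * p).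
Proof.
move=> tQ kP W1 W4.
have e1 : ka.+1 + (P - ka.+1) = P by lia.
have e2 : t1 + (Q - t1) = Q by lia.
have e3 : 2 * (Q - t1) + t1 = 2 * Q - t1 by lia.
have e4 : 2 * (P - ka.+1) + ka.+1 = (2 * P - ka).-1 by lia.
rewrite e1 e2 in W1; rewrite e3 e4 in W4.
split; apply/negP => h.
- rewrite mulnC in h; nia.
- have e5 : (2 * P - ka).-1 * q + q = (2 * P - ka) * q.
    by rewrite addnC -mulSn prednK //; lia.
  rewrite e5 mulnC in W4; lia.
Qed.

Lemma fin_odd P Q t1 ka d p q : t1 <= Q -> ka < P ->
  (d * ((Q - t1) + t1) + (Q - t1)) * p < (d * ((P - ka.+1) + ka.+1) + (P - ka.+1)) * q + q ->
  (2 * ka.+1 + (P - ka.+1)) * q < (2 * t1 + (Q - t1)) * p + q ->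
  ~~ (q * (d * P + (P - ka)) < (d * Q + (Q - t1)) * p) /\
  ~~ ((2 * Q - (Q - t1)) * p <= q * (2 * P - (P - ka))).
Proof.
move=> tQ kP W2 W3.
have e1 : (Q - t1) + t1 = Q by lia.
have e2 : (P - ka.+1) + ka.+1 = P by lia.
have e3 : d * P + (P - ka.+1) = (d * P + (P - ka)).-1 by lia.
have e4 : 2 * ka.+1 + (P - ka.+1) = (2 * P - (P - ka)).+1 by lia.
have e5 : 2 * t1 + (Q - t1) = 2 * Q - (Q - t1) by lia.
rewrite e1 e2 e3 in W2; rewrite e4 e5 in W3.
split; apply/negP => h.
- have e6 : (d * P + (P - ka)).-1 * q + q = (d * P + (P - ka)) * q.
    by rewrite addnC -mulSn prednK //; lia.
  rewrite e6 mulnC in W2; lia.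
- rewrite mulSn mulnC in W3; lia.
Qed.

Lemma size_pat dd (A B : seq nat) : 0 < dd -> A != [::] -> B != [::] ->
  1 < size (rep_pattern dd A B A).
Proof.
move=> dd0 nA nB; rewrite /rep_pattern size_cat flat_size size_cat.
have : (0 < size A)%N by rewrite lt0n size_eq0.
have : (0 < size B)%N by rewrite lt0n size_eq0.
have := leq_pmull (size A + size B) dd0.
lia.
Qed.

Lemma ex_dd n : 2 <= n -> exists d', 2 * n - 2 = d'.+2.
Proof. by move=> hn; exists (2 * n - 4); lia. Qed.

Lemma CS0 : CS 0 = [:: 2].
Proof. by vm_compute. Qed.

Local Open Scope ring_scope.

Fixpoint Fm (l : seq nat) (z : rat) : rat :=
  if l is x :: t then (x%:R + Fm t z)^-1 else z.

Lemma cf_cat l t : cf (l ++ t) = Fm l (cf t).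
Proof. by elim: l => //= x l ->. Qed.

Lemma cf_ge0 l : 0 <= cf l.
Proof. elim: l => //= x l IH; rewrite invr_ge0; apply: addr_ge0 => //; exact: ler0n. Qed.

Lemma cf_le1 l : (0 < head 0%N l)%N -> cf l <= 1.
Proof.
case: l => //= x l x0.
have h : 1 <= x%:R + cf l.
  have : (1 : rat) <= x%:R by rewrite ler1n.
  have := cf_ge0 l; lra.
rewrite invf_le1 //; lra.
Qed.

Lemma F_mob l : all (fun x => 0 < x)%N l -> exists a b c d : nat,
  [/\ (0 < c)%N, (if odd (size l) then a * d == b * c + 1 else a * d + 1 == b * c)%N,
      (l != [::] -> 0 < a)%N &
      forall z : rat, 0 <= z -> Fm l z = (a%:R + b%:R * z) / (c%:R + d%:R * z)].
Proof.
elim: l => [|x l IH] /=.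
  exists 0%N, 1%N, 1%N, 0%N; split => // z _.
  by rewrite add0r mul1r mul0r addr0 divr1.
case/andP => x0 /IH [a [b [c [d [c0 det _ Fz]]]]].
exists c, d, (x * c + a)%N, (x * d + b)%N; split => //.
- by rewrite addn_gt0 muln_gt0 x0 c0.
- move: det; case: (odd (size l)) => /= /eqP det; apply/eqP; nia.
- move=> z z0; rewrite Fz //.
  have hc : 0 < c%:R + d%:R * z :> rat.
    have : 0 < c%:R :> rat by rewrite ltr0n.
    have : 0 <= d%:R * z :> rat by apply: mulr_ge0 => //; exact: ler0n.
    lra.
  have hx : 0 < (x * c + a)%N%:R + (x * d + b)%N%:R * z :> rat.
    rewrite !natrD !natrM.
    have : 0 < x%:R * c%:R :> rat by rewrite -natrM ltr0n muln_gt0 x0 c0.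
    have : 0 <= a%:R :> rat by exact: ler0n.
    have : 0 <= (x%:R * d%:R + b%:R) * z :> rat.
      apply: mulr_ge0 => //; apply: addr_ge0; rewrite -?natrM; exact: ler0n.
    lra.
  rewrite !natrD !natrM in hx *.
  field.
  apply/andP; split; [exact: lt0r_neq0 | ]. 
  exact: lt0r_neq0 hc.
Qed.

Lemma Fz_frac (a b c d u v : nat) : (0 < v)%N -> (0 < c)%N ->
  (a%:R + b%:R * (u%:R / v%:R)) / (c%:R + d%:R * (u%:R / v%:R)) =
  (a * v + b * u)%N%:R / (c * v + d * u)%N%:R :> rat.
Proof.
move=> v0 c0.
have hv : v%:R != 0 :> rat by rewrite pnatr_eq0 -lt0n.
have hcv : (c * v + d * u)%N%:R != 0 :> rat.
  by rewrite pnatr_eq0 -lt0n addn_gt0 muln_gt0 c0 v0.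
rewrite !natrD !natrM in hcv *.
have hcv' : c%:R + d%:R * (u%:R / v%:R) != 0 :> rat.
  have -> : c%:R + d%:R * (u%:R / v%:R) = (c%:R * v%:R + d%:R * u%:R) / v%:R :> rat.
    by field.
  by rewrite mulf_neq0 // invr_eq0.
by field; rewrite hv hcv.
Qed.

Lemma cf1 (mk : nat) : cf [:: mk] = 1%N%:R / mk%:R.
Proof. by rewrite /= addr0 div1r. Qed.

Lemma cf2 (mk dd : nat) : (0 < dd)%N -> cf [:: mk; dd] = dd%:R / (mk * dd + 1)%N%:R.
Proof.
move=> d0 /=; rewrite addr0 natrD natrM.
have hd : dd%:R != 0 :> rat by rewrite pnatr_eq0 -lt0n.
have h2 : mk%:R * dd%:R + 1 != 0 :> rat.
  by rewrite -natrM natr1 pnatr_eq0.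
by field; rewrite hd h2.
Qed.

Lemma ltq_nat (x y N D : nat) : (0 < y)%N -> (0 < D)%N ->
  (x%:R / y%:R < N%:R / D%:R :> rat) = (x * D < N * y)%N.
Proof.
move=> y0 D0.
by rewrite ltr_pdivrMr ?ltr0n // mulrAC ltr_pdivlMr ?ltr0n // -!natrM ltr_nat.
Qed.

Lemma leq_nat (x y N D : nat) : (0 < y)%N -> (0 < D)%N ->
  (x%:R / y%:R <= N%:R / D%:R :> rat) = (x * D <= N * y)%N.
Proof.
move=> y0 D0.
by rewrite ler_pdivrMr ?ltr0n // mulrAC ler_pdivlMr ?ltr0n // -!natrM ler_nat.
Qed.

Lemma coprime_lin x y u v : (x * u = y * v + 1)%N -> coprime x y.
Proof.
move=> e; rewrite /coprime.
have h1 : (gcdn x y %| y * v)%N by rewrite dvdn_mulr // dvdn_gcdr.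
have h2 : (gcdn x y %| y * v + 1)%N by rewrite -e dvdn_mulr // dvdn_gcdl.
by rewrite (dvdn_addr _ h1) dvdn1 in h2.
Qed.


Local Open Scope ring_scope.

Theorem lemma2p1 (ms : seq nat) (n : nat) (S1 S2 : seq nat) :
  (2 <= size ms)%N ->
  all (fun x => 0 < x)%N ms ->
  (2 <= last 0 ms)%N ->
  0 < cf ms < 1 ->
  (forall p : nat, (2 <= p)%N -> cf ms != (p%:R)^-1) ->
  (2 <= n)%N ->
  CS_decomp (cf ms) (head 0%N ms) S1 S2 ->
  forall s : rat, inI1 ms n s || inI2 ms n s ->
    (if ~~ odd (size ms)
     then ~~ cyc_contains (rep_pattern (2 * n - 2) S1 S2 S1) (CS s)
     else ~~ cyc_contains (rep_pattern (2 * n - 2) S2 S1 S2) (CS s)).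
Proof.
move=> hsz hpos hlast hr01 hnp hn hdec s hs.
rewrite /inI1 /inI2 /cf_endA /cf_endB in hs.
case/lastP: ms hsz hpos hlast hr01 hnp hdec hs => [//|init mk] hsz hpos hlast hr01 hnp hdec hs.
rewrite size_rcons /= in hsz hs *.
rewrite last_rcons in hlast hs.
rewrite -cats1 take_size_cat // in hs.
rewrite all_rcons in hpos; case/andP: hpos => mk0 hpos.
have init0 : init != [::] by case: init hsz {hpos hr01 hnp hdec hs}.
have [a [b [c [d [c0 det a0 Fz]]]]] := F_mob init hpos.
have {}a0 := a0 init0.
set Q0 := (a * mk + b)%N; set P0 := (c * mk + d)%N.
have hr : cf (rcons init mk) = Q0%:R / P0%:R.
  rewrite -cats1 cf_cat Fz ?cf_ge0 // cf1 Fz_frac //.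
  by rewrite /Q0 /P0 !muln1.
set dd := (2 * n - 2)%N in hs *.
have dd0 : (0 < dd)%N by rewrite /dd; lia.
have hB : cf ((init ++ [:: mk]) ++ [:: dd]) = (dd * Q0 + a)%N%:R / (dd * P0 + c)%N%:R.
  rewrite -catA cf_cat Fz ?cf_ge0 // cf2 // Fz_frac //; last by rewrite addn1.
  by congr (_%:R / _%:R); rewrite /Q0 /P0; ring.
have hA : cf (init ++ [:: mk.-1; 2%N]) = (2 * Q0 - a)%N%:R / (2 * P0 - c)%N%:R.
  rewrite cf_cat Fz ?cf_ge0 // cf2 // Fz_frac //; last by rewrite addn1.
  by congr (_%:R / _%:R); rewrite /Q0 /P0 !key_pred.
have hp0 : (0 < P0)%N by rewrite /P0; nia.
have cop : coprime Q0 P0.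
  move: det; case: (odd (size init)) => /eqP det.
    by rewrite coprime_sym; apply: (coprime_lin _ _ a c); rewrite /Q0 /P0; nia.
  by apply: (coprime_lin _ _ c a); rewrite /Q0 /P0; nia.
have hq : numq (cf (rcons init mk)) = Posz Q0.
  have h := @coprimeq_num (Posz Q0) (Posz P0) cop.
  by rewrite hr; rewrite gtr0_sg ?mul1r in h; [exact: h | rewrite ltz_nat].
have hp : denq (cf (rcons init mk)) = Posz P0.
  have h := @coprimeq_den (Posz Q0) (Posz P0) cop.
  have hne : (Posz P0 == 0) = false by rewrite eqz_nat; apply/negbTE; rewrite -lt0n.
  rewrite hne ger0_norm // in h.
  by rewrite hr; exact: h.
have Q2 : (2 <= Q0)%N by rewrite /Q0; nia.
have aQ : (a < Q0)%N by rewrite /Q0; nia.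
have QP : (Q0 < P0)%N.
  by case/andP: hr01 => _; rewrite hr ltr_pdivrMr ?ltr0n // mul1r ltr_nat.
have HCS := CS_formula _ _ _ hq hp (ltnW Q2) (ltnW QP).
case: hdec => [[i hi] [pal1 _] [c1 c2] [ne1 [h1a _]] [ne2 [h2a _]]].
rewrite HCS in hi c1 c2.
have [t1 [ka [e t1Q HS1 HS2]]] := core P0 Q0 S1 S2 i _ Q2 (ltn_trans (ltnW Q2) QP) cop hi pal1 c1 c2 ne1 ne2 h1a h2a.
have Q0p : (0 < Q0)%N by lia.
have sS1 : size S1 = t1 by rewrite HS1 size_mkseq.
have sS2 : size S2 = (Q0 - t1)%N by rewrite HS2 size_mkseq.
have CQ : Cc P0 Q0 Q0 = P0 by rewrite -[Q0 in Cc _ _ Q0]add0n CcD // Cc0.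
have Ct : Cc P0 Q0 t1 = ka.+1 by rewrite -[t1]add0n (Cc_shift _ _ _ _ _ Q0p e) mul0n div0n addn0.
have kaP : (ka.+1 <= P0)%N.
  have t1Q' : (t1 <= Q0)%N by case/andP: t1Q => _ /ltnW.
  by have := @Cc_mono P0 Q0 t1 Q0 t1Q'; rewrite Ct CQ.
have uS1 : sumn S1 = ka.+1 by rewrite HS1 sum_win add0n Ct Cc0 // subn0.
have uS2 : sumn S2 = (P0 - ka.+1)%N by rewrite HS2 sum_win subnKC ?CQ ?Ct //; case/andP: t1Q => _ /ltnW.
have hh : (0 < head 0%N init)%N by move: init0 hpos; case: (init) => //= x l _ /andP[].
have hA1 : cf (init ++ [:: mk.-1; 2%N]) <= 1.
  by apply: cf_le1; move: init0 hh; case: (init).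
have hB1 : cf ((init ++ [:: mk]) ++ [:: dd]) <= 1.
  by apply: cf_le1; move: init0 hh; case: (init).
have s01 : 0 <= s <= 1.
  case: (odd (size init)) hs => /= /orP [] /andP [] => h1 h2.
  - by apply/andP; split; [exact: h1 | exact: le_trans h2 hA1].
  - by apply/andP; split; [exact: le_trans (cf_ge0 _) (ltW h1) | exact: h2].
  - by apply/andP; split; [exact: h1 | exact: le_trans (ltW h2) hB1].
  - by apply/andP; split; [exact: le_trans (cf_ge0 _) h1 | exact: h2].
have [->|sn0] := eqVneq s 0.
  by rewrite CS0; case: ifP => _; apply: not_small; apply: size_pat.
have s0 : 0 < s by rewrite lt_def sn0; case/andP: s01.
set q := `|numq s|%N; set p := `|denq s|%N.
have hqs : numq s = Posz q by rewrite /q gez0_abs // ltW // numq_gt0.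
have hps : denq s = Posz p by rewrite /p gez0_abs // ltW // denq_gt0.
have p0 : (0 < p)%N by rewrite -ltz_nat -hps denq_gt0.
have q0 : (0 < q)%N by rewrite -ltz_nat -hqs numq_gt0.
have sE : s = q%:R / p%:R.
  by have := divq_num_den s; rewrite hqs hps => <-.
have qp : (q <= p)%N.
  by case/andP: s01 => _; rewrite sE ler_pdivrMr ?ltr0n // mul1r ler_nat.
rewrite (CS_formula _ _ _ hqs hps q0 qp).
have [dd' edd] := ex_dd n hn.
rewrite -/dd in edd.
have tQ : (t1 <= Q0)%N by case/andP: t1Q => _ /ltnW.
rewrite hA hB sE in hs.
rewrite negbK edd in hs *.
move: det hs; case: (odd (size init)) => /= /eqP det hs.
- (* k even *)
  have [at1 cka] : a = t1 /\ c = ka.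
    apply: (solve_even P0 Q0 a c t1 ka cop) => //; first by rewrite a0.
    rewrite /Q0 /P0 mulnDl (mulnC d a) det; ring.
  subst a c.
  apply/negP => hc.
  have [W1 W2 W3 W4] := s_side p q S1 S2 dd' q0 hc.
  rewrite sS1 sS2 uS1 uS2 in W1 W2 W3 W4.
  have [nI2 nI1] := fin_even P0 Q0 t1 ka dd'.+2 p q tQ kaP W1 W4.
  case/orP: hs => [/andP [_ h] | /andP [h _]].
  + rewrite leq_nat // in h; first by rewrite h in nI1.
    by rewrite subn_gt0 (leq_trans kaP) // leq_pmull.
  + rewrite ltq_nat // in h; first by rewrite h in nI2.
    by rewrite addn_gt0 muln_gt0 hp0.
- (* k odd *)
  have [at1 cka] : (a + t1 = Q0 /\ c + ka = P0)%N.
    apply: (solve_odd P0 Q0 a c t1 ka cop) => //; first by rewrite a0.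
    rewrite /Q0 /P0 mulnDl -det; ring.
  have ea : a = (Q0 - t1)%N by rewrite -at1 addnK.
  have ec : c = (P0 - ka)%N by rewrite -cka addnK.
  rewrite ea ec in hs.
  apply/negP => hc.
  have [W1 W2 W3 W4] := s_side p q S2 S1 dd' q0 hc.
  rewrite sS1 sS2 uS1 uS2 in W1 W2 W3 W4.
  have [nI1 nI2] := fin_odd P0 Q0 t1 ka dd'.+2 p q tQ kaP W2 W3.
  case/orP: hs => [/andP [_ h] | /andP [h _]].
  + rewrite ltq_nat // in h; first by rewrite h in nI1.
    by rewrite addn_gt0 muln_gt0 hp0.
  + rewrite leq_nat // in h; first by rewrite h in nI2.
    by rewrite subn_gt0; apply: leq_ltn_trans (leq_subr _ _) _; rewrite mul2n -addnn -{1}[P0]addn0 ltn_add2l.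
Qed.
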